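(* Let $m,n\ge0$ and $a_1,\dots,a_{m+n}\in\Sigma$. Then there is an inclusion of presheaves \[\mathcal{L}\big(\mathrm{COSK}^\Sigma(\square[a_1,\dots,a_m]_{\leq 1}\times_\Sigma\square[a_{m+1},\dots,a_{m+n}]_{\leq 1})\big)\subset \mathrm{cosk}_1^{\widehat{\square},\Sigma}\big(\widehat{\square}[a_1,\dots,a_m]_{\leq 1}\times_\Sigma\widehat{\square}[a_{m+1},\dots,a_{m+n}]_{\leq 1}\big).\] Moreover, when $\Sigma\setminus\{\tau\}$ is non-empty, there exist two labelled cubes $\square[a_1,\dots,a_m]$, $\square[a_{m+1},\dots,a_{m+n}]$ for which this inclusion is strict.
   Context: Cubes and categories of cubes: $[0]=\{()\}$, $[n]=\{0,1\}^n$ with the product order; face maps $\delta_i^\alpha:[n-1]\to[n]$ insert $\alpha$ at position $i$; $\square$ is the category with objects $[n]$ generated by face maps; a map $[m]\to[n]$ is adjacency-preserving if strictly increasing and it sends pairs at Hamming distance $1$ to pairs at Hamming distance $1$; $\widehat\square$ is the category with objects $[n]$, $n\ge0$, and all adjacency-preserving maps. Presheaves on $\square$ (resp. $\widehat\square$) are precubical sets (resp. transverse symmetric precubical sets); $\square[p]=\square(-,[p])$, $\widehat\square[p]=\widehat\square(-,[p])$; $K_{\le1}$ is truncation to dimensions $\le1$. $\mathcal L$ is the left adjoint of the restriction functor from transverse symmetric precubical sets to precubical sets. Labels: $\Sigma$ is a non-empty set with a distinguished element $\tau$; $\Sigma\setminus\{\tau\}$ carries an involution $a\mapsto\bar a$.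 $!\Sigma$ is the precubical set with $(!\Sigma)_0=\{()\}$, $(!\Sigma)_n=\Sigma^n$, $\partial_i^0=\partial_i^1$ deleting the $i$-th letter. $\mathrm{sh}$ is the left adjoint of the inclusion into transverse symmetric precubical sets of the full subcategory of those $X$ in which two $p$-cubes ($p\ge2$) with the same boundary are equal. Labelled precubical sets are precubical sets over $!\Sigma$; labelled transverse symmetric precubical sets are transverse symmetric precubical sets over $\mathrm{sh}\mathcal L(!\Sigma)$; $\mathcal L$ sends $K\to!\Sigma$ to $\mathcal L(K)\to\mathcal L(!\Sigma)\to\mathrm{sh}\mathcal L(!\Sigma)$. $\square[a_1,\dots,a_n]$ is $\square[n]\to!\Sigma$ sending $\mathrm{id}_{[n]}$ to $(a_1,\dots,a_n)$; $\widehat\square[a_1,\dots,a_n]=\mathcal L(\square[a_1,\dots,a_n])$. A $1$-dimensional labelled (transverse symmetric or not) precubical set amounts to sets $K_0,K_1$, maps $\partial_1^0,\partial_1^1:K_1\to K_0$ and $\ell:K_1\to\Sigma$. $\mathrm{cosk}_1^{\widehat\square,\Sigma}$ (resp. $\mathrm{cosk}_1^{\square,\Sigma}$) is the right adjoint of truncation $K\mapsto K_{\le1}$ from labelled transverse symmetric precubical sets (resp. labelled precubical sets) to $1$-dimensional ones. Fibered product: for $1$-dimensional labelled $K,L$, $K\times_\Sigma L$ has $0$-cubes $K_0\times L_0$, $1$-cubes $(K_1\times L_0)\sqcup(K_0\times L_1)\sqcup\{(x,y)\in K_1\times L_1:\overline{\ell(x)}=\ell(y)\}$, faces componentwise on the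 $1$-cube components, labels $\ell(x,y)=\ell(x)$, $\ell(y)$, resp. $\tau$ in the three cases. Labelled directed coskeleton: for a $1$-dimensional labelled precubical set $K$ with $K_0$ identified with $[p]$ (here $[m]\times[n]=[m+n]$), and an $n'$-cube $x$ of $\mathrm{cosk}_1^{\square,\Sigma}(K)$, let $x_0:[n']\cong\square([0],[n'])\to[p]$ be the induced map on vertices; $x_0$ is non-twisted if $x_0=\psi\circ\phi$ with $\psi:[q]\to[p]$ in $\square$ and $\phi(\epsilon_1,\dots,\epsilon_{n'})=(\epsilon_{i_1},\dots,\epsilon_{i_q})$ where $\{1,\dots,n'\}\subset\{i_1,\dots,i_q\}$ and the first occurrence of $\epsilon_i$ precedes the first occurrence of $\epsilon_{i+1}$. $\mathrm{COSK}^\Sigma(K)$ is the sub-object of $\mathrm{cosk}_1^{\square,\Sigma}(K)$ with the same cubes of dimension $\le1$ and, in dimensions $\ge2$, exactly the cubes $x$ with $x_0$ non-twisted. *)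

(* Defs.v *)
From Stdlib Require Import Relations.Relation_Definitions Relations.Relation_Operators.
From mathcomp Require Import all_boot.
Set Implicit Arguments. Unset Strict Implicit. Unset Printing Implicit Defensive.

Section Defs.
Variable Sg : Type.
Variable tau : Sg.
Variable bar : Sg -> Sg.     (* the involution (only used on Sigma \ {tau}) *)

Definition vert (n : nat) := {ffun 'I_n -> bool}.

Definition vle n (u v : vert n) := [forall j, u j ==> v j].
Definition vlt n (u v : vert n) := vle u v && (u != v).
Definition ham n (u v : vert n) := #|[pred j | u j != v j]|.

Definition vface n (i : 'I_n.+1) (alpha : bool) (v : vert n) : vert n.+1 :=
  [ffun j => match unlift i j with Some k => v k | None => alpha end].

(* maps of the category box : composites of face maps *)
Inductive sqmap : forall q p : nat, (vert q -> vert p) -> Prop :=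
| sq_id q : @sqmap q q (fun v => v)
| sq_face q p (f : vert q -> vert p) (i : 'I_p.+1) (alpha : bool) :
    @sqmap q p f -> @sqmap q p.+1 (fun v => vface i alpha (f v)).

(* maps of the category hat-box : adjacency-preserving maps *)
Definition adj_pres p n (f : vert p -> vert n) : Prop :=
  (forall u v, vlt u v -> vlt (f u) (f v)) /\
  (forall u v, ham u v = 1 -> ham (f u) (f v) = 1).

(* the 1-cubes of [n] (= box([1],[n]) = hat-box([1],[n])):
   a vertex v together with a direction j with v_j = 0 *)
Definition cedge n := {x : vert n * 'I_n | x.1 x.2 == false}.
Definition esrc n (e : cedge n) : vert n := (sval e).1.
Definition etgt n (e : cedge n) : vert n :=
  [ffun k => (k == (sval e).2) || (sval e).1 k].
Definition edir n (e : cedge n) : 'I_n := (sval e).2.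

(* 1-dimensional labelled (transverse symmetric) precubical sets       *)
Record lab1 := Lab1 {
  V0 : Type; E1 : Type; d0 : E1 -> V0; d1 : E1 -> V0; lab : E1 -> Sg }.

Definition cube1s p (s : cedge p -> Sg) : lab1 :=
  @Lab1 (vert p) (cedge p) (@esrc p) (@etgt p) s.

Definition cube1 n (a : 'I_n -> Sg) : lab1 := cube1s (fun e => a (edir e)).

(* hat-box[a_1,...,a_n]_{<=1} = L(box[a_1,...,a_n])_{<=1}: the categories
   box and hat-box coincide on [0],[1], and L does not change dimensions
   <= 1 (L(!Sigma)_1 = Sigma = (sh L(!Sigma))_1), so this is the same
   1-dimensional labelled object. *)
Definition hcube1 n (a : 'I_n -> Sg) : lab1 := cube1 a.

Record lmap (A B : lab1) := LMap { m0 : V0 A -> V0 B; m1 : E1 A -> E1 B }.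
Definition is_lmap A B (h : lmap A B) : Prop :=
  (forall e, d0 (m1 h e) = m0 h (d0 e)) /\
  (forall e, d1 (m1 h e) = m0 h (d1 e)) /\
  (forall e, lab (m1 h e) = lab e).

Inductive fedge (K L : lab1) : Type :=
| FL : E1 K -> V0 L -> fedge K L
| FR : V0 K -> E1 L -> fedge K L
| FS (x : E1 K) (y : E1 L) : lab x <> tau /\ bar (lab x) = lab y -> fedge K L.

Definition fd0 K L (z : fedge K L) : V0 K * V0 L :=
  match z with FL x y => (d0 x, y) | FR x y => (x, d0 y)
             | FS x y _ => (d0 x, d0 y) end.
Definition fd1 K L (z : fedge K L) : V0 K * V0 L :=
  match z with FL x y => (d1 x, y) | FR x y => (x, d1 y)
             | FS x y _ => (d1 x, d1 y) end.
Definition flab K L (z : fedge K L) : Sg :=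
  match z with FL x _ => lab x | FR _ y => lab y | FS _ _ _ => tau end.

Definition fibprod (K L : lab1) : lab1 :=
  @Lab1 (V0 K * V0 L) (fedge K L) (@fd0 K L) (@fd1 K L) (@flab K L).

Definition vconcat m n (uv : vert m * vert n) : vert (m + n) :=
  [ffun k => match split k with inl i => uv.1 i | inr j => uv.2 j end].

(* an n-cube of cosk_1^{box,Sigma}(K): a label w in (!Sigma)_n = Sigma^n
   and a labelled map box[w]_{<=1} -> K *)
Record bcube (K : lab1) (n : nat) := BCube {
  bw : 'I_n -> Sg; bmap : lmap (cube1 bw) K }.
Definition is_bcube K n (x : bcube K n) : Prop := is_lmap (bmap x).

Definition first_occ q n' (idx : 'I_q -> 'I_n') (i : 'I_n') (k : 'I_q) :=
  idx k = i /\ forall k' : 'I_q, k' < k -> idx k' <> i.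

Definition non_twisted n' P (x0 : vert n' -> vert P) : Prop :=
  exists (q : nat) (psi : vert q -> vert P) (idx : 'I_q -> 'I_n'),
    @sqmap q P psi /\
    (forall i : 'I_n', exists k, idx k = i) /\
    (forall (i j : 'I_n') (ki kj : 'I_q), (i : nat).+1 = j ->
        first_occ idx i ki -> first_occ idx j kj -> ki < kj) /\
    (forall eps : vert n', x0 eps = psi [ffun k => eps (idx k)]).

(* COSK^Sigma(K) with K_0 identified with [P] via iota *)
Definition in_COSK K P (iota : V0 K -> vert P) n (x : bcube K n) : Prop :=
  is_bcube x /\ (n <= 1 \/ non_twisted (fun v => iota (m0 (bmap x) v))).

(* L(X)_p for a sub-presheaf X of cosk_1^{box,Sigma}(K): the coend      *)
(*   L(X)_p = (sum_n X_n x hat-box([p],[n])) / ~                        *)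
(* with ~ generated by (d x, phi) ~ (x, delta o phi), delta a face map *)
Record lelt (K : lab1) (p : nat) := LElt {
  ln : nat; lx : bcube K ln; lphi : vert p -> vert ln }.

Definition lvalid K P (iota : V0 K -> vert P) p (t : lelt K p) : Prop :=
  in_COSK iota (lx t) /\ adj_pres (lphi t).

Definition is_bface K n (i : 'I_n.+1) (alpha : bool)
    (x : bcube K n) (x' : bcube K n.+1) : Prop :=
  (forall j, bw x j = bw x' (lift i j)) /\
  (forall v, m0 (bmap x) v = m0 (bmap x') (vface i alpha v)) /\
  (forall (e : cedge n) (e' : cedge n.+1),
      esrc e' = vface i alpha (esrc e) -> etgt e' = vface i alpha (etgt e) ->
      m1 (bmap x) e = m1 (bmap x') e').

Definition lrel K P (iota : V0 K -> vert P) p (t t' : lelt K p) : Prop :=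
  lvalid iota t /\ lvalid iota t' /\
  exists n (x : bcube K n) (x' : bcube K n.+1) (phi : vert p -> vert n)
         (phi' : vert p -> vert n.+1) (i : 'I_n.+1) (alpha : bool),
    t = LElt x phi /\ t' = LElt x' phi' /\
    (forall u, phi' u = vface i alpha (phi u)) /\ is_bface i alpha x x'.

Definition lequiv K P (iota : V0 K -> vert P) p : relation (lelt K p) :=
  clos_refl_sym_trans (lelt K p) (@lrel K P iota p).

(* p-cubes of sh L(!Sigma) are determined by, and correspond to, the    *)
(* edge-labellings of [p] of the form e |-> w_{direction of phi(e)} for *)
(* some w in Sigma^n and phi in hat-box([p],[n])         *)
Definition realized p (s : cedge p -> Sg) : Prop :=
  exists n (w : 'I_n -> Sg) (phi : vert p -> vert n), adj_pres phi /\
    forall (e : cedge p) (e' : cedge n),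
      esrc e' = phi (esrc e) -> etgt e' = phi (etgt e) -> s e = w (edir e').

(* a p-cube of cosk_1^{hat-box,Sigma}(K): a p-cube sigma of sh L(!Sigma)
   (given by its edge labels s) and a labelled map hat-box[sigma]_{<=1} -> K *)
Record hcube (K : lab1) (p : nat) := HCube {
  hs : cedge p -> Sg; hmap : lmap (cube1s hs) K }.
Definition is_hcube K p (c : hcube K p) : Prop := realized (hs c) /\ is_lmap (hmap c).

(* the canonical map L(COSK K)_p -> cosk_1^{hat-box,Sigma}(K)_p :
   [x, phi] |-> ([w, phi], x o phi)                                    *)
Definition lmaps K p (t : lelt K p) (c : hcube K p) : Prop :=
  (forall u, m0 (hmap c) u = m0 (bmap (lx t)) (lphi t u)) /\
  (forall (e : cedge p) (e' : cedge (ln t)),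
      esrc e' = lphi t (esrc e) -> etgt e' = lphi t (etgt e) ->
      m1 (hmap c) e = m1 (bmap (lx t)) e' /\ hs c e = bw (lx t) (edir e')).

End Defs.

(* Main.v *)
Require Import Defs.
From Stdlib Require Import Relations.Relation_Definitions Relations.Relation_Operators.
From mathcomp Require Import all_boot zify.
From Stdlib Require Import FunctionalExtensionality ProofIrrelevance ClassicalEpsilon.
Set Implicit Arguments. Unset Strict Implicit. Unset Printing Implicit Defensive.


Lemma vface_lift n (i : 'I_n.+1) a (v : vert n) k : vface i a v (lift i k) = v k.
Proof. by rewrite /vface ffunE liftK. Qed.

Lemma vface_i n (i : 'I_n.+1) a (v : vert n) : vface i a v i = a.
Proof. by rewrite /vface ffunE unlift_none. Qed.

Lemma vface_inj n (i : 'I_n.+1) a : injective (@vface n i a).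
Proof. by move=> u v e; apply/ffunP=> k; rewrite -(vface_lift i a u) e vface_lift. Qed.

Lemma ham1P n (u v : vert n) :
  ham u v = 1 <-> exists j, u j != v j /\ forall k, u k != v k -> k = j.
Proof.
split.
  move=> /eqP /card1P [j Hj]; exists j; split.
    by have := Hj j; rewrite !inE eqxx => ->.
  by move=> k Hk; have := Hj k; rewrite !inE Hk => /esym /eqP.
move=> [j [Hj Hk]]; apply/eqP/card1P; exists j => k; rewrite !inE.
case: (boolP (u k != v k)) => h; first by rewrite (Hk _ h) eqxx.
by apply/esym/eqP => e; move: h; rewrite e Hj.
Qed.

Lemma ham_vface n (i : 'I_n.+1) a (u v : vert n) :
  ham (vface i a u) (vface i a v) = 1 <-> ham u v = 1.
Proof.
rewrite !ham1P; split => [[j [Hj Hk]]|[j [Hj Hk]]].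
  case: (unliftP i j) Hj Hk => [j' ->|->]; last by rewrite !vface_i eqxx.
  rewrite !vface_lift => Hj Hk; exists j'; split => // k Hk'.
  by apply: (@lift_inj _ i); apply: Hk; rewrite !vface_lift.
exists (lift i j); rewrite !vface_lift; split => // k.
case: (unliftP i k) => [k' ->|->]; last by rewrite !vface_i eqxx.
by rewrite !vface_lift => /Hk ->.
Qed.

Lemma vle_vface n (i : 'I_n.+1) a (u v : vert n) :
  vle (vface i a u) (vface i a v) = vle u v.
Proof.
apply/forallP/forallP => H k.
  by have := H (lift i k); rewrite !vface_lift.
by case: (unliftP i k) => [k' ->|->]; rewrite ?vface_lift ?vface_i ?implybb.
Qed.

Lemma vlt_vface n (i : 'I_n.+1) a (u v : vert n) :
  vlt (vface i a u) (vface i a v) = vlt u v.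
Proof.
rewrite /vlt vle_vface; congr (_ && _).
by apply/idP/idP; apply: contra => /eqP e; apply/eqP;
  [rewrite e | apply: vface_inj e].
Qed.

Lemma cedge_eq n (e e' : cedge n) : esrc e = esrc e' -> etgt e = etgt e' -> e = e'.
Proof.
case: e => [[u j] Hj]; case: e' => [[u' j'] Hj'].
rewrite /esrc /etgt /= => Eu; subst u'.
have Hj0 : u j = false := elimT eqP Hj.
move=> /ffunP /(_ j); rewrite !ffunE eqxx Hj0 orbF /= orbF => /esym /eqP E.
subst j'; congr (exist _ _ _); apply: eq_irrelevance.
Qed.

Lemma etgt_src n (e : cedge n) k : etgt e k = (k == edir e) || esrc e k.
Proof. by rewrite /etgt ffunE. Qed.

Lemma esrc_dir n (e : cedge n) : esrc e (edir e) = false.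
Proof. by case: e => [[u j] H]; apply/eqP. Qed.

Lemma etgt_dir n (e : cedge n) : etgt e (edir e) = true.
Proof. by rewrite etgt_src eqxx. Qed.

Lemma cedge_vle n (e : cedge n) : vle (esrc e) (etgt e).
Proof. by apply/forallP => k; rewrite etgt_src; apply/implyP => ->; rewrite orbT. Qed.

Lemma cedge_neq n (e : cedge n) : esrc e != etgt e.
Proof. by apply/eqP => /ffunP /(_ (edir e)); rewrite esrc_dir etgt_dir. Qed.

Lemma cedge_vlt n (e : cedge n) : vlt (esrc e) (etgt e).
Proof. by rewrite /vlt cedge_vle cedge_neq. Qed.

Lemma cedge_ham n (e : cedge n) : ham (esrc e) (etgt e) = 1.
Proof.
apply/ham1P; exists (edir e); rewrite esrc_dir etgt_dir; split => // k.
rewrite etgt_src; case: (k =P edir e) => [->|_] //=; by rewrite eqxx.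
Qed.

Lemma edge_exists n (u v : vert n) : vlt u v -> ham u v = 1 ->
  exists e : cedge n, esrc e = u /\ etgt e = v.
Proof.
move=> /andP [/forallP Hle Hne] /ham1P [j [Hj Hk]].
have uj : u j = false by move: (Hle j) Hj; case: (u j); case: (v j).
exists (exist _ (u, j) (introT eqP uj)); split => //.
apply/ffunP => k; rewrite ffunE /=.
case: (eqVneq k j) => [->|kj] /=; first by move: Hj; rewrite uj; case: (v j).
case: (eqVneq (u k) (v k)) => // /Hk E; by rewrite E eqxx in kj.
Qed.

Definition eface n (i : 'I_n.+1) (a : bool) (e : cedge n) : cedge n.+1 :=
  exist _ (vface i a (esrc e), lift i (edir e))
    (introT eqP (etrans (vface_lift i a (esrc e) (edir e)) (esrc_dir e))).

Lemma eface_src n (i : 'I_n.+1) a e : esrc (eface i a e) = vface i a (esrc e).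
Proof. by []. Qed.
Lemma eface_dir n (i : 'I_n.+1) a e : edir (eface i a e) = lift i (edir e).
Proof. by []. Qed.
Lemma eface_tgt n (i : 'I_n.+1) a e : etgt (eface i a e) = vface i a (etgt e).
Proof.
apply/ffunP => k; rewrite etgt_src eface_src eface_dir.
case: (unliftP i k) => [k' ->|->].
  by rewrite !vface_lift etgt_src (inj_eq (@lift_inj _ i)).
by rewrite !vface_i (negbTE (neq_lift _ _)).
Qed.


Definition incr q (g : nat -> nat) := forall k k', k < k' -> k' < q -> g k < g k'.

Definition sqpat q P (g : nat -> nat) (c : nat -> bool) (psi : vert q -> vert P) :=
  incr q g /\ (forall k, k < q -> g k < P) /\
  forall w (r : 'I_P), (forall k : 'I_q, g k = r -> psi w r = w k) /\
                  ((forall k : 'I_q, g k <> r) -> psi w r = c r).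

Lemma incr_le q g : incr q g -> forall k k', k <= k' -> k' < q -> g k <= g k'.
Proof.
move=> H k k'; rewrite leq_eqVlt => /orP [/eqP -> //|lt] lt'.
by apply: ltnW; apply: H.
Qed.

Lemma incr_ge q g : incr q g -> forall k, k < q -> k <= g k.
Proof.
move=> H; elim=> [//|k IH] lt.
have := H k k.+1 (ltnSn k) lt; have := IH (ltnW lt); lia.
Qed.

Lemma incr_gap q g : incr q g -> forall k j, k <= j -> j < q -> g k + (j - k) <= g j.
Proof.
move=> H k; elim=> [|j IH] kj jq; first by (have -> : k = 0 by lia); rewrite subnn addn0.
case: (eqVneq k j.+1) => [->|ne]; first by rewrite subnn addn0.
have kj' : k <= j by lia.
have := IH kj' (ltnW jq); have := H j j.+1 (ltnSn j) jq; lia.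
Qed.

Lemma incr_id q g : incr q g -> (forall k, k < q -> g k < q) -> forall k, k < q -> g k = k.
Proof.
move=> H B k kq; have h1 := incr_ge H kq.
have kq' : k <= q.-1 by lia.
have qq : q.-1 < q by lia.
have := incr_gap H kq' qq; have := B _ qq; lia.
Qed.

Lemma missing_val q P g : incr q g -> q < P -> exists r0, r0 < P /\ forall k, k < q -> g k <> r0.
Proof.
move=> H qP.
case: (boolP [exists k : 'I_q, g k != k]) => [ex|].
  have ex' : exists k, (k < q) && (g k != k).
    by case/existsP: ex => k hk; exists k; rewrite ltn_ord.
  case: (ex_minnP ex') => k0 /andP [k0q gk0] min.
  exists k0; split; first by lia.
  move=> k kq; case: (ltnP k k0) => kk0.
    have : g k == k.
      by apply/negPn/negP => hn; have := min k; rewrite kq hn /= => /(_ isT); lia.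
    by move/eqP => ->; lia.
  have := incr_ge H k0q; have := incr_le H kk0 kq; move: gk0 => /eqP; lia.
move=> /existsPn all; exists q; split => // k kq.
by have := all (Ordinal kq); rewrite negbK => /eqP /= ->; lia.
Qed.

Lemma sq_char q P psi : @sqmap q P psi -> exists g c, sqpat g c psi.
Proof.
elim => {q P psi} [q | q p f i a Hf [g [c [H1 [H2 H3]]]]].
  exists id, (fun _ => false); split; first by move=> k k' ? ?.
  split => // w r; split; first by move=> k /= E; congr (w _); apply: val_inj.
  by move=> /(_ r).
exists (fun k => bump i (g k)), (fun r : nat => if r == i :> nat then a else c (unbump i r)).
split; first by move=> k k' kk' k'q; have := H1 k k' kk' k'q; rewrite /bump; case: leqP; case: leqP; lia.
split; first by move=> k kq; have := H2 k kq; rewrite /bump; case: leqP; lia.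
move=> w r; rewrite /vface ffunE; case: (unliftP i r) => [r' ->|->].
  have [A1 A2] := H3 w r'; split.
    move=> k /= E; apply: A1; have := f_equal (unbump i) E; rewrite !bumpK; done.
  move=> Hn; rewrite /= (negbTE (_ : bump i r' != i)) ?bumpK.
    apply: A2 => k E; apply: (Hn k) => /=; by rewrite E.
  by rewrite eq_sym neq_bump.
split; last by rewrite eqxx.
by move=> k /= E; move: (neq_bump i (g k)); rewrite E eqxx.
Qed.

Lemma sq_build d : forall q P g c psi, P = q + d -> @sqpat q P g c psi -> sqmap psi.
Proof.
elim: d => [|d IH] q P g c psi HP [H1 [H2 H3]].
  rewrite addn0 in HP; subst P.
  have gid := incr_id H1 H2.
  have -> : psi = fun w => w.
    apply: functional_extensionality => w; apply/ffunP => r.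
    have [A1 _] := H3 w r; exact: A1 r (gid _ (ltn_ord r)).
  exact: sq_id.
case: P psi HP H2 H3 => [|P'] psi HP H2 H3; first by lia.
have qP : q < P'.+1 by lia.
have [r0 [r0P r0n]] := missing_val H1 qP.
pose i := Ordinal r0P.
pose psi' := fun w => [ffun r' : 'I_P' => psi w (lift i r')].
have -> : psi = fun w => vface i (c r0) (psi' w).
  apply: functional_extensionality => w; apply/ffunP => r.
  case: (unliftP i r) => [r' ->|->]; first by rewrite vface_lift ffunE.
  rewrite vface_i; have [_ A2] := H3 w i; apply: A2 => k /= E.
  exact: (r0n k (ltn_ord k) E).
apply: sq_face; apply: (IH q P' (fun k => unbump r0 (g k)) (fun r => c (bump r0 r))); first by lia.
split.
  move=> k k' kk' k'q; have := H1 k k' kk' k'q.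
  have := r0n k (ltn_trans kk' k'q); have := r0n k' k'q.
  rewrite /unbump; case: ltnP; case: ltnP; lia.
split.
  move=> k kq; have := H2 k kq; have := r0n k kq; move: (r0P).
  rewrite /unbump; case: ltnP; lia.
move=> w r'; rewrite ffunE; have [A1 A2] := H3 w (lift i r'); split.
  move=> k E; apply: A1 => /=.
  by rewrite -E unbumpK //; rewrite inE; apply/eqP; exact: r0n k (ltn_ord k).
move=> Hn; apply: A2 => k /= E; apply: (Hn k); by rewrite E bumpK.
Qed.


Definition isproj d P (f : vert d -> vert P) (r : 'I_P) (j : 'I_d) := forall e, f e r = e j.
Definition isconst d P (f : vert d -> vert P) (r : 'I_P) := exists b, forall e, f e r = b.
Definition CS d P (f : vert d -> vert P) :=
  (forall r, isconst f r \/ exists j, isproj f r j) /\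
  (forall j, exists r, isproj f r j) /\
  (forall (j j' : 'I_d) (r' : 'I_P), j.+1 = j' -> isproj f r' j' ->
      exists r : 'I_P, r < r' /\ isproj f r j).

Definition ind d (j : 'I_d) : vert d := [ffun k => k == j].
Definition zv d : vert d := [ffun _ => false].

Lemma proj_uniq d P (f : vert d -> vert P) r j j' : isproj f r j -> isproj f r j' -> j = j'.
Proof. by move=> H H'; have := H (ind j); rewrite H' !ffunE eqxx => /eqP. Qed.

Lemma proj_nconst d P (f : vert d -> vert P) r j : isproj f r j -> isconst f r -> False.
Proof.
move=> H [b Hb]; have := H (ind j); have := H (zv d).
by rewrite !Hb !ffunE eqxx => ->.
Qed.

Lemma CS_gen d P (f : vert d -> vert P) : CS f ->
  forall (j j' : 'I_d) (r' : 'I_P), j < j' -> isproj f r' j' ->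
      exists r : 'I_P, r < r' /\ isproj f r j.
Proof.
move=> [_ [_ H3]].
suff: forall n (j j' : 'I_d) (r' : 'I_P), j' = j + n.+1 :> nat -> isproj f r' j' ->
      exists r : 'I_P, r < r' /\ isproj f r j.
  by move=> H j j' r' lt; apply: (H (j' - j).-1); lia.
elim=> [|n IH] j j' r' E Hp.
  by apply: (H3 j j' r' _ Hp); lia.
have jm_lt : j + n.+1 < d by have := ltn_ord j'; lia.
have Ej : (Ordinal jm_lt).+1 = j' by rewrite E /=; lia.
have [rm [rm_lt Hm]] := H3 (Ordinal jm_lt) j' r' Ej Hp.
have [r [r_lt Hr]] := IH j (Ordinal jm_lt) rm erefl Hm.
by exists r; split => //; lia.
Qed.

Lemma first_occ_ex q d (idx : 'I_q -> 'I_d) (j : 'I_d) :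
  (exists k, idx k = j) -> exists k, first_occ idx j k.
Proof.
move=> [k0 Hk0].
have ex : exists n, [exists kk : 'I_q, (val kk == n) && (idx kk == j)].
  by exists (val k0); apply/existsP; exists k0; rewrite eqxx Hk0 eqxx.
case: (ex_minnP ex) => n /existsP [kk /andP [/eqP Ekk /eqP Ij]] min.
exists kk; split => // k' lt E.
have : n <= k' by apply: min; apply/existsP; exists k'; rewrite eqxx E eqxx.
have Ekk' : nat_of_ord kk = n := Ekk. lia.
Qed.

Lemma nt_CS d P (f : vert d -> vert P) : non_twisted f -> CS f.
Proof.
move=> [q [psi [idx [Hsq [Hsurj [Hord Hf]]]]]].
have [g [c [H1 [H2 H3]]]] := sq_char Hsq.
have projk : forall k : 'I_q, isproj f (Ordinal (H2 k (ltn_ord k))) (idx k).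
  move=> k e; rewrite Hf; have [A1 _] := H3 [ffun k => e (idx k)] (Ordinal (H2 k (ltn_ord k))).
  by rewrite (A1 k) // ffunE.
have classif : forall r : 'I_P, (exists k : 'I_q, g k = r) \/ isconst f r.
  move=> r; case: (boolP [exists k : 'I_q, g k == r]) => [/existsP [k /eqP E]|/existsPn N].
    by left; exists k.
  right; exists (c r) => e; rewrite Hf; have [_ A2] := H3 [ffun k => e (idx k)] r.
  by apply: A2 => k E; have := N k; rewrite E eqxx.
split.
  move=> r; case: (classif r) => [[k E]|]; last by left.
  right; exists (idx k); have -> : r = Ordinal (H2 k (ltn_ord k)) by apply: val_inj.
  exact: projk.
split.
  by move=> j; have [k Hk] := Hsurj j; exists (Ordinal (H2 k (ltn_ord k))); rewrite -Hk.
move=> j j' r' Ejj Hp.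
case: (classif r') => [[k' Ek']|Hc]; last by case: (proj_nconst Hp Hc).
have Hr' : r' = Ordinal (H2 k' (ltn_ord k')) by apply: val_inj.
have Ik' : idx k' = j'.
  by apply: (proj_uniq (projk k')); rewrite -Hr'.
have [ki Hki] := first_occ_ex (Hsurj j).
have [kj Hkj] := first_occ_ex (Hsurj j').
have lt := Hord j j' ki kj Ejj Hki Hkj.
have kjk' : kj <= k'.
  by rewrite leqNgt; apply/negP => lt'; case: Hkj => _ /(_ k' lt'); rewrite Ik'.
exists (Ordinal (H2 ki (ltn_ord ki))); split.
  rewrite Hr' /=; have := H1 ki kj lt (ltn_ord kj); have := incr_le H1 kjk' (ltn_ord k'); lia.
by case: Hki => <- _; exact: projk.
Qed.

Lemma isprojP d P (f : vert d -> vert P) r j : reflect (isproj f r j) [forall e, f e r == e j].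
Proof. by apply: (iffP forallP) => H e; [apply/eqP/H | apply/eqP/H]. Qed.

Lemma CS_nt d P (f : vert d -> vert P) : CS f -> non_twisted f.
Proof.
move=> [C1 [C2 C3]].
pose pr (n : nat) := [exists r : 'I_P, (val r == n) && [exists j, [forall e, f e r == e j]]].
have prP : forall r : 'I_P, pr r = [exists j, [forall e, f e r == e j]].
  move=> r; apply/existsP/idP => [[r' /andP [/eqP E H]]|H]; last by exists r; rewrite eqxx.
  by have -> : r = r' by apply: val_inj.
pose R := [seq n <- iota 0 P | pr n].
pose q := size R.
pose g := fun k => nth 0 R k.
have Rsort : sorted ltn R by apply: sorted_filter => //; [exact: ltn_trans | exact: iota_ltn_sorted].
have H1 : incr q g.
  move=> k k' kk' k'q; apply: (sorted_ltn_nth ltn_trans) => //; rewrite inE; lia.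
have gR : forall k, k < q -> g k \in R by move=> k kq; exact: mem_nth.
have H2 : forall k, k < q -> g k < P.
  by move=> k /gR; rewrite mem_filter mem_iota => /andP [_ /andP [_]].
have qP : q <= P by rewrite /q size_filter -{2}(size_iota 0 P); exact: count_size.
have gpr : forall k, k < q -> pr (g k) by move=> k /gR; rewrite mem_filter => /andP [].
pose c := fun n : nat => if insub n is Some r then f (zv d) r else false.
pose psi : vert q -> vert P := fun w => [ffun r : 'I_P => if [pick k : 'I_q | g k == r] is Some k then w k else c r].
have ginj : forall k k' : 'I_q, g k = g k' -> k = k'.
  move=> k k' E; apply: val_inj => /=; case: (ltngtP k k') => // lt.
    by have := H1 k k' lt (ltn_ord k'); lia.
  by have := H1 k' k lt (ltn_ord k); lia.
have Hpat : sqpat g c psi.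
  split => //; split => // w r; split.
    move=> k E; rewrite /psi ffunE; case: pickP => [k' /eqP E'|/(_ k)]; last by rewrite E eqxx.
    by rewrite (ginj k' k) // E'.
  move=> N; rewrite /psi ffunE; case: pickP => [k' /eqP E'|_]; first by case: (N k').
  by rewrite /c valK.
have Hsq : sqmap psi by apply: (sq_build (d := P - q) (g := g) (c := c)) => //; lia.
have ex_idx : forall k : 'I_q, exists j : 'I_d, forall r : 'I_P, val r = g k -> isproj f r j.
  move=> k; have := gpr k (ltn_ord k); case/existsP => r /andP [/eqP E /existsP [j /isprojP Hj]].
  by exists j => r' E'; have -> : r' = r by apply: val_inj; rewrite E' E.
have [idx Hidx] := fin_all_exists ex_idx.
have inR : forall r : 'I_P, forall j, isproj f r j -> exists k : 'I_q, g k = r.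
  move=> r j Hj; have rR : val r \in R.
    rewrite mem_filter mem_iota /= ltn_ord andbT prP; apply/existsP; exists j; exact/isprojP.
  have iq : index (val r) R < q by rewrite /q index_mem.
  by exists (Ordinal iq); rewrite /= /g nth_index.
exists q, psi, idx; split => //; split.
  move=> j; have [r Hr] := C2 j; have [k Ek] := inR r j Hr.
  by exists k; apply: (proj_uniq (Hidx k r (esym Ek)) Hr).
split.
  move=> i j ki kj Eij [Ii Fi] [Ij Fj].
  have Hr' := Hidx kj (Ordinal (H2 kj (ltn_ord kj))) erefl; rewrite Ij in Hr'.
  have [r [rlt Hr]] := C3 i j _ Eij Hr'.
  have [k'' Ek''] := inR r i Hr.
  have Ik'' : idx k'' = i by apply: (proj_uniq (Hidx k'' r (esym Ek'')) Hr).
  have k''kj : k'' < kj.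
    rewrite ltnNge; apply/negP => le.
    have := incr_le H1 le (ltn_ord k''); move: rlt; rewrite /= -Ek''; lia.
  rewrite ltnNge; apply/negP => le.
  case: (ltngtP k'' ki) => [lt|lt|E].
  - by case: (Fi k'' lt Ik'').
  - lia.
  - lia.
move=> eps; apply/ffunP => r; rewrite /psi ffunE.
case: (C1 r) => [[b Hb]|[j Hj]].
  case: pickP => [k /eqP E|_].
    have := Hidx k r (esym E) => Hp; by case: (proj_nconst Hp (ex_intro _ b Hb)).
  by rewrite /c valK Hb.
have [k Ek] := inR r j Hj.
case: pickP => [k' /eqP E'|/(_ k)]; last by rewrite Ek eqxx.
rewrite ffunE (Hj eps); have Hk' := Hidx k' r (esym E').
by rewrite (proj_uniq Hk' Hj).
Qed.

Lemma face_proj_back d P (f : vert d.+1 -> vert P) (i : 'I_d.+1) a r j :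
  CS f -> isproj (fun v => f (vface i a v)) r j -> isproj f r (lift i j).
Proof.
move=> [C1 _] Hp; case: (C1 r) => [[b Hb]|[J HJ]].
  by case: (proj_nconst Hp); exists b => e; rewrite Hb.
case: (unliftP i J) HJ => [J' ->|->] HJ.
  have HJ' : isproj (fun v => f (vface i a v)) r J' by move=> e; rewrite HJ vface_lift.
  by rewrite (proj_uniq Hp HJ').
by case: (proj_nconst Hp); exists a => e; rewrite HJ vface_i.
Qed.

Lemma CS_face d P (f : vert d.+1 -> vert P) (i : 'I_d.+1) a :
  CS f -> CS (fun v => f (vface i a v)).
Proof.
move=> HCS; have [C1 [C2 C3]] := HCS; split.
  move=> r; case: (C1 r) => [[b Hb]|[J HJ]]; first by left; exists b.
  case: (unliftP i J) HJ => [J' ->|->] HJ.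
    by right; exists J' => e; rewrite HJ vface_lift.
  by left; exists a => e; rewrite HJ vface_i.
split.
  by move=> j; have [r Hr] := C2 (lift i j); exists r => e; rewrite Hr vface_lift.
move=> j j' r' E Hp.
have Hp' := face_proj_back HCS Hp.
have lt : lift i j < lift i j' by rewrite /= /bump -E; case: leqP; case: leqP; lia.
have [r [rlt Hr]] := CS_gen HCS lt Hp'.
by exists r; split => // e; rewrite Hr vface_lift.
Qed.


Lemma vconcat_l m n (uv : vert m * vert n) i : vconcat uv (lshift n i) = uv.1 i.
Proof. by rewrite /vconcat ffunE -[lshift n i]/(unsplit (inl i)) unsplitK. Qed.
Lemma vconcat_r m n (uv : vert m * vert n) j : vconcat uv (rshift m j) = uv.2 j.
Proof. by rewrite /vconcat ffunE -[rshift m j]/(unsplit (inr j)) unsplitK. Qed.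

Lemma vconcat_inj m n : injective (@vconcat m n).
Proof.
move=> [u1 u2] [v1 v2] E; congr pair; apply/ffunP => k.
  by have := congr1 (fun w : vert (m + n) => w (lshift n k)) E; rewrite !vconcat_l.
by have := congr1 (fun w : vert (m + n) => w (rshift m k)) E; rewrite !vconcat_r.
Qed.

Lemma vconcat_vle m n (u v : vert m * vert n) :
  vle u.1 v.1 -> vle u.2 v.2 -> vle (vconcat u) (vconcat v).
Proof.
move=> /forallP H1 /forallP H2; apply/forallP => k.
rewrite /vconcat !ffunE; case: (split k) => [i|j]; [exact: H1 | exact: H2].
Qed.

Lemma vle_refl n (u : vert n) : vle u u.
Proof. by apply/forallP => k; exact: implybb. Qed.

Section TT.
Variables (Sg : Type) (tau : Sg) (bar : Sg -> Sg) (m n : nat)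
  (a1 : 'I_m -> Sg) (a2 : 'I_n -> Sg).
Definition TT := fibprod tau bar (cube1 a1) (cube1 a2).
Definition iotaT (uv : V0 TT) : vert (m + n) := vconcat uv.

Lemma Tedge_eq (z z' : E1 TT) : d0 z = d0 z' -> d1 z = d1 z' -> z = z'.
Proof.
case: z => [x y|x y|x y p]; case: z' => [x' y'|x' y'|x' y' p'] /= E E';
  have E1 := congr1 fst E; have E2 := congr1 snd E; have E3 := congr1 fst E'; have E4 := congr1 snd E'; rewrite /= in E1 E2 E3 E4; clear E E'.
- by subst; congr FL; apply: cedge_eq.
- by move: (cedge_neq x); rewrite E1 E3 eqxx.
- by move: (cedge_neq y'); rewrite -E2 -E4 eqxx.
- by move: (cedge_neq x'); rewrite -E1 -E3 eqxx.
- by subst; congr FR; apply: cedge_eq.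
- by move: (cedge_neq x'); rewrite -E1 -E3 eqxx.
- by move: (cedge_neq y); rewrite E2 E4 eqxx.
- by move: (cedge_neq x); rewrite E1 E3 eqxx.
- have ex : x = x' by apply: cedge_eq.
  have ey : y = y' by apply: cedge_eq.
  subst x' y'; congr FS; apply: proof_irrelevance.
Qed.

Lemma Tedge_vle (z : E1 TT) : vle (iotaT (d0 z)) (iotaT (d1 z)).
Proof.
by case: z => [x y|x y|x y p]; apply: vconcat_vle; first [exact: vle_refl | exact: cedge_vle].
Qed.

Lemma Tedge_neq (z : E1 TT) : iotaT (d0 z) != iotaT (d1 z).
Proof.
apply/negP => /eqP /vconcat_inj; case: z => [x y|x y|x y p] /= E;
  have E1 := congr1 fst E; have E2 := congr1 snd E; rewrite /= in E1 E2.
- by move: (cedge_neq x); rewrite E1 eqxx.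
- by move: (cedge_neq y); rewrite E2 eqxx.
- by move: (cedge_neq x); rewrite E1 eqxx.
Qed.

Lemma vert0_eq (u v : vert 0) : u = v.
Proof. by apply/ffunP => -[]. Qed.

Lemma CS_cube d (x : bcube TT d) :
  in_COSK iotaT x -> CS (fun v => iotaT (m0 (bmap x) v)).
Proof.
move=> [Hb [Hd|Hnt]]; last exact: nt_CS.
case: d x Hb Hd => [|[|//]] x [Hd0 [Hd1 _]] _.
  split; last by split => -[].
  by move=> r; left; exists (iotaT (m0 (bmap x) (zv 0)) r) => e; rewrite (vert0_eq e (zv 0)).
have z0 : (zv 1) ord0 == false by rewrite ffunE.
pose e0 : cedge 1 := exist _ (zv 1, ord0) z0.
have Es : esrc e0 = zv 1 by [].
set f := fun v => iotaT (m0 (bmap x) v).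
have Hfe : forall e : vert 1, f e = if e ord0 then f (etgt e0) else f (esrc e0).
  move=> e; case E: (e ord0); rewrite /f; do 2 f_equal;
  by apply/ffunP => k; rewrite (ord1 k) ?etgt_src Es !ffunE /= E.
have Hv : vle (f (esrc e0)) (f (etgt e0)).
  by have := Tedge_vle (m1 (bmap x) e0); rewrite Hd0 Hd1.
have Hn : f (esrc e0) != f (etgt e0).
  by have := Tedge_neq (m1 (bmap x) e0); rewrite Hd0 Hd1.
have cls : forall r, isconst f r \/ isproj f r ord0.
  move=> r; case: (eqVneq (f (esrc e0) r) (f (etgt e0) r)) => [E|N].
    by left; exists (f (esrc e0) r) => e; rewrite Hfe; case: (e ord0); rewrite ?E.
  right => e; rewrite Hfe; move: (forallP Hv r) N.
  by case: (e ord0); case: (f (esrc e0) r); case: (f (etgt e0) r).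
split; first by move=> r; case: (cls r) => H; [left | right; exists ord0].
split.
  move=> j; rewrite (ord1 j).
  case: (boolP [exists r, f (esrc e0) r != f (etgt e0) r]) => [/existsP [r Hr]|/existsPn N].
    exists r; case: (cls r) => // -[b Hb]; by move: Hr; rewrite !Hb eqxx.
  by move: Hn; rewrite (_ : f (esrc e0) = f (etgt e0)) ?eqxx //; apply/ffunP => r; apply/eqP; rewrite -[_ == _]negbK N.
by move=> j j' r'; rewrite (ord1 j) (ord1 j').
Qed.

Definition dface d (i : 'I_d.+1) (al : bool) (x : bcube TT d.+1) : bcube TT d :=
  @BCube _ TT d (fun j : 'I_d => bw x (lift i j))
    (@LMap _ (cube1 (fun j : 'I_d => bw x (lift i j))) TT
       (fun v => m0 (bmap x) (vface i al v)) (fun e => m1 (bmap x) (eface i al e))).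

Lemma dface_bcube d (i : 'I_d.+1) al (x : bcube TT d.+1) : is_bcube x -> is_bcube (dface i al x).
Proof.
move=> [H0 [H1 H2]]; split; [|split] => e.
- exact: H0 (eface i al e).
- have h : d1 (m1 (bmap x) (eface i al e)) = m0 (bmap x) (etgt (eface i al e)) := H1 _.
  rewrite eface_tgt in h; exact h.
- exact: H2 (eface i al e).
Qed.

Lemma dface_bface d (i : 'I_d.+1) al (x : bcube TT d.+1) : is_bface i al (dface i al x) x.
Proof.
split => //; split => // e e' Es Et.
have -> : e' = eface i al e by apply: cedge_eq; [exact: Es | rewrite eface_tgt; exact: Et].
by [].
Qed.

Lemma dface_COSK d (i : 'I_d.+1) al (x : bcube TT d.+1) :
  in_COSK iotaT x -> in_COSK iotaT (dface i al x).
Proof.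
move=> H; have Hcs := CS_cube H; case: H => Hb _; split; first exact: dface_bcube.
case: (leqP d 1) => [|lt]; first by left.
right; apply: CS_nt; exact: (CS_face i al Hcs).
Qed.

End TT.


Definition reduced p d (phi : vert p -> vert d) := forall j, exists u, phi u j != phi (zv p) j.

Lemma nonconst_adj p d (phi : vert p -> vert d) j u :
  phi u j != phi (zv p) j -> exists u1 u2, ham u1 u2 = 1 /\ phi u1 j != phi u2 j.
Proof.
move: {2}#|[pred k | u k]| (leqnn #|[pred k | u k]|) => N; elim: N u => [|N IH] u Hw Hu.
  have : u = zv p.
    apply/ffunP => k; rewrite ffunE; apply/negP => uk.
    have : 0 < #|[pred k | u k]| by apply/card_gt0P; exists k.
    lia.
  by move=> E; rewrite E eqxx in Hu.
case: (boolP [exists k, u k]) => [/existsP [k uk]|/existsPn N0].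
  pose u' : vert p := [ffun i => (i != k) && u i].
  have h : ham u' u = 1.
    apply/ham1P; exists k; rewrite ffunE eqxx uk; split => // i; rewrite ffunE.
    by case: (eqVneq i k) => //= _; rewrite eqxx.
  case: (eqVneq (phi u' j) (phi u j)) => [E|N1]; last by exists u', u.
  apply: (IH u'); last by rewrite E.
  have Ec2 : #|[pred i | u' i]|.+1 = #|[pred k | u k]|.
    rewrite (cardD1 k [pred k | u k]) inE uk /= add1n; congr S.
    by apply: eq_card => i; rewrite !inE ffunE.
  by move: Hw; rewrite -Ec2 ltnS.
have : u = zv p by apply/ffunP => k; rewrite ffunE; apply/negbTE; exact: N0.
by move=> E; rewrite E eqxx in Hu.
Qed.

Lemma phi_distinct p d (phi : vert p -> vert d) : adj_pres phi -> reduced phi ->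
  forall j j', (forall u, phi u j = phi u j') -> j = j'.
Proof.
move=> [_ Ha] Hr j j' E.
have [u Hu] := Hr j; have [u1 [u2 [H12 N]]] := nonconst_adj Hu.
have /ham1P [k [_ Hk]] := Ha _ _ H12.
rewrite (Hk j N) (Hk j') //; by rewrite -!E.
Qed.

Definition NP p P (G : vert p -> vert P) (r : 'I_P) :=
  [exists u, G u r != G (zv p) r] && [forall r' : 'I_P, (r' < r) ==> [exists u, G u r' != G u r]].

Lemma Ffacts p d P (f : vert d -> vert P) (phi : vert p -> vert d) :
  CS f -> adj_pres phi -> reduced phi ->
  exists F : 'I_d -> 'I_P, (forall j j' : 'I_d, j < j' -> F j < F j') /\
    (forall r, NP (fun u => f (phi u)) r <-> exists j, F j = r) /\
    (forall j u, f (phi u) (F j) = phi u j).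
Proof.
move=> HCS Ha Hr; have [C1 [C2 C3]] := HCS.
have exF : forall j : 'I_d, exists r : 'I_P, isproj f r j /\ forall r', isproj f r' j -> r <= r'.
  move=> j; have [r0 Hr0] := C2 j.
  have ex : exists n, [exists r : 'I_P, (val r == n) && [forall e, f e r == e j]].
    by exists (val r0); apply/existsP; exists r0; rewrite eqxx; apply/isprojP.
  case: (ex_minnP ex) => n /existsP [r /andP [/eqP Er /isprojP Hp]] min.
  exists r; split => // r' Hr'; rewrite Er; apply: min; apply/existsP; exists r'.
  by rewrite eqxx; apply/isprojP.
have [F HF] := fin_all_exists exF.
have Fv : forall j u, f (phi u) (F j) = phi u j by move=> j u; rewrite (proj1 (HF j)).
exists F; split.
  move=> j j' lt; have [r [rlt Hr']] := CS_gen HCS lt (proj1 (HF j')).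
  have := proj2 (HF j) r Hr'; lia.
split => // r; split.
  move=> /andP [/existsP [u Hu] /forallP Hm].
  case: (C1 r) => [[b Hb]|[j Hj]]; first by move: Hu; rewrite !Hb eqxx.
  exists j; have le := proj2 (HF j) r Hj.
  apply: val_inj; apply/eqP; rewrite eqn_leq le /= leqNgt; apply/negP => lt.
  have /existsP [v Hv] := implyP (Hm (F j)) lt.
  by move: Hv; rewrite Fv Hj eqxx.
move=> [j <-]; apply/andP; split.
  have [u Hu] := Hr j; apply/existsP; exists u; by rewrite !Fv.
apply/forallP => r'; apply/implyP => lt.
case: (boolP [exists u, f (phi u) r' != f (phi u) (F j)]) => // /existsPn N.
have E : forall u, f (phi u) r' = phi u j by move=> u; rewrite -Fv; apply/eqP; rewrite -[_ == _]negbK N.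
case: (C1 r') => [[b Hb]|[j'' Hj'']].
  have [u Hu] := Hr j; by move: Hu; rewrite -!E !Hb eqxx.
have Ej : j'' = j by apply: (phi_distinct Ha Hr) => u; rewrite -E Hj''.
rewrite Ej in Hj''; have := proj2 (HF j) r' Hj''; lia.
Qed.

Lemma enum_claim d d' (F F' : nat -> nat) :
  (forall j j', j < j' -> j' < d -> F j < F j') ->
  (forall j j', j < j' -> j' < d' -> F' j < F' j') ->
  (forall j, j < d -> exists j', j' < d' /\ F' j' = F j) ->
  (forall j', j' < d' -> exists j, j < d /\ F j = F' j') ->
  forall k, k < d -> k < d' /\ F k = F' k.
Proof.
move=> H1 H2 H3 H4; elim/ltn_ind => k IH kd.
have [k' [k'd E']] := H3 k kd.
have kk' : k <= k'.
  rewrite leqNgt; apply/negP => lt.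
  have [_ E2] := IH k' lt (ltn_trans lt kd).
  have := H1 k' k lt kd; lia.
have kd' : k < d' by lia.
have [j [jd Ej]] := H4 k kd'.
have kj : k <= j.
  rewrite leqNgt; apply/negP => lt.
  have [_ E2] := IH j lt (ltn_trans lt kd).
  have := H2 j k lt kd'; lia.
have Fkj : F k <= F j.
  by case: (ltngtP k j) => [lt|lt|<-]; [have := H1 k j lt jd; lia | lia | lia].
split => //.
case: (ltngtP k k') => [lt|lt|E]; [have := H2 k k' lt k'd; lia | lia | by subst k'; rewrite E'].
Qed.

Lemma enum_uniq d d' (F F' : nat -> nat) :
  (forall j j', j < j' -> j' < d -> F j < F j') ->
  (forall j j', j < j' -> j' < d' -> F' j < F' j') ->
  (forall j, j < d -> exists j', j' < d' /\ F' j' = F j) ->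
  (forall j', j' < d' -> exists j, j < d /\ F j = F' j') ->
  d = d' /\ forall k, k < d -> F k = F' k.
Proof.
move=> H1 H2 H3 H4.
have A := enum_claim H1 H2 H3 H4.
have B := enum_claim H2 H1 H4 H3.
have dd : d = d'.
  apply/eqP; rewrite eqn_leq; apply/andP; split.
    case: d H1 H3 H4 A {B} => // d0 _ _ _ A; exact: (proj1 (A d0 (ltnSn _))).
  case: d' H2 H3 H4 B {A} => // d0 _ _ _ B; exact: (proj1 (B d0 (ltnSn _))).
by split => // k kd; exact: (proj2 (A k kd)).
Qed.

Section Det.
Variables (p P d d' : nat) (f : vert d -> vert P) (f' : vert d' -> vert P)
  (phi : vert p -> vert d) (phi' : vert p -> vert d').
Hypotheses (Hf : CS f) (Hf' : CS f') (Ha : adj_pres phi) (Ha' : adj_pres phi')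
  (Hr : reduced phi) (Hr' : reduced phi') (HG : forall u, f (phi u) = f' (phi' u)).

Definition natF q (F : 'I_q -> 'I_P) (k : nat) : nat :=
  if insub k is Some j then val (F j) else 0.

Lemma natF_val q (F : 'I_q -> 'I_P) (j : 'I_q) : natF F j = F j.
Proof. by rewrite /natF valK. Qed.

Lemma det_enum : exists (F : 'I_d -> 'I_P) (F' : 'I_d' -> 'I_P),
   d = d' /\ (forall k, k < d -> natF F k = natF F' k) /\
   (forall j u, f (phi u) (F j) = phi u j) /\ (forall j u, f' (phi' u) (F' j) = phi' u j).
Proof.
have [F [F1 [F2 F3]]] := Ffacts Hf Ha Hr.
have [F' [F1' [F2' F3']]] := Ffacts Hf' Ha' Hr'.
have EG : (fun u => f (phi u)) = (fun u => f' (phi' u)) by apply: functional_extensionality.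
rewrite EG in F2.
exists F, F'.
have inc : forall q (G : 'I_q -> 'I_P), (forall j j' : 'I_q, j < j' -> G j < G j') ->
    forall j j', j < j' -> j' < q -> natF G j < natF G j'.
  move=> q G HG0 j j' lt lt'.
  have := natF_val G (Ordinal (ltn_trans lt lt')); have := natF_val G (Ordinal lt').
  move=> -> ->; exact: HG0.
have [dd Fe] : d = d' /\ forall k, k < d -> natF F k = natF F' k.
  apply: enum_uniq; first exact: inc; first exact: inc.
    move=> j jd; have /F2' [j' Ej'] : NP (fun u => f' (phi' u)) (F (Ordinal jd)).
      by apply/F2; exists (Ordinal jd).
    by exists j'; split => //; rewrite (natF_val F' j') (natF_val F (Ordinal jd)) Ej'.
  move=> j jd; have /F2 [j' Ej'] : NP (fun u => f' (phi' u)) (F' (Ordinal jd)).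
    by apply/F2'; exists (Ordinal jd).
  by exists j'; split => //; rewrite (natF_val F' (Ordinal jd)) (natF_val F j') Ej'.
by [].
Qed.
End Det.

Lemma det_dim p P d d' (f : vert d -> vert P) (f' : vert d' -> vert P)
  (phi : vert p -> vert d) (phi' : vert p -> vert d') :
  CS f -> CS f' -> adj_pres phi -> adj_pres phi' -> reduced phi -> reduced phi' ->
  (forall u, f (phi u) = f' (phi' u)) -> d = d'.
Proof. by move=> H1 H2 H3 H4 H5 H6 H7; have [F [F' [dd _]]] := @det_enum p P d d' f f' phi phi' H1 H2 H3 H4 H5 H6 H7. Qed.

Lemma det_same p P d (f f' : vert d -> vert P) (phi phi' : vert p -> vert d) :
  CS f -> CS f' -> adj_pres phi -> adj_pres phi' -> reduced phi -> reduced phi' ->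
  (forall u, f (phi u) = f' (phi' u)) ->
  (forall u, phi u = phi' u) /\ (forall e, f e = f' e).
Proof.
move=> Hf Hf' Ha Ha' Hr Hr' HG.
have [F [F' [_ [Fe [F3 F3']]]]] := @det_enum p P d d f f' phi phi' Hf Hf' Ha Ha' Hr Hr' HG.
have FF : forall j, F j = F' j.
  by move=> j; apply: val_inj; have := Fe j (ltn_ord j); rewrite !natF_val.
have Ephi : forall u, phi u = phi' u.
  by move=> u; apply/ffunP => j; rewrite -F3 -F3' HG FF.
split => // e; apply/ffunP => r.
have [C1 _] := Hf; have [C1' _] := Hf'.
move: (C1 r) (C1' r) => [[b Hb]|[j Hj]] [[b' Hb']|[j' Hj']].
- rewrite Hb Hb'; have := HG (zv p); move=> /(congr1 (fun w : vert P => w r)).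
  by rewrite Hb Hb'.
- have [u Hu] := Hr' j'; move: Hu; rewrite -!Hj' -!HG !Hb; by rewrite eqxx.
- have [u Hu] := Hr j; move: Hu; rewrite -!Hj HG (HG (zv p)) !Hb'; by rewrite eqxx.
- rewrite Hj Hj'; congr (e _); apply: (phi_distinct Ha' Hr') => u.
  by rewrite -Hj' -HG Hj Ephi.
Qed.


Section Main.
Variables (Sg : Type) (tau : Sg) (bar : Sg -> Sg) (m n : nat)
  (a1 : 'I_m -> Sg) (a2 : 'I_n -> Sg).
Local Notation T := (TT tau bar a1 a2).
Local Notation io := (@iotaT Sg tau bar m n a1 a2).

Lemma adj_face p d (i : 'I_d.+1) al (phi : vert p -> vert d) :
  adj_pres (fun u => vface i al (phi u)) -> adj_pres phi.
Proof.
move=> [H1 H2]; split => u v.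
  by move=> /H1; rewrite vlt_vface.
by move=> /H2 /ham_vface.
Qed.

Lemma reduce p : forall d (x : bcube T d) (phi : vert p -> vert d),
  lvalid io (LElt x phi) ->
  exists t : lelt T p, lvalid io t /\ reduced (lphi t) /\ lequiv io t (LElt x phi) /\
     forall u, m0 (bmap (lx t)) (lphi t u) = m0 (bmap x) (phi u).
Proof.
elim=> [|d IH] x phi Hv.
  exists (LElt x phi); split => //; split; first by move=> -[].
  by split => //; apply: rst_refl.
case: (boolP [exists j, [forall u, phi u j == phi (zv p) j]]) => [/existsP [i /forallP Hi]|/existsPn N].
  pose al := phi (zv p) i.
  pose phi2 : vert p -> vert d := fun u => [ffun k => phi u (lift i k)].
  have Ephi : forall u, phi u = vface i al (phi2 u).
    move=> u; apply/ffunP => k; case: (unliftP i k) => [k' ->|->].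
      by rewrite vface_lift ffunE.
    by rewrite vface_i; apply/eqP; exact: Hi.
  have Ephi' : phi = fun u => vface i al (phi2 u) by apply: functional_extensionality.
  case: Hv => Hc Ha.
  have Ha2 : adj_pres phi2 by apply: (adj_face (i := i) (al := al)); rewrite -Ephi'.
  have Hv2 : lvalid io (LElt (dface i al x) phi2) by split => //=; exact: dface_COSK.
  have [t [Ht1 [Ht2 [Ht3 Ht4]]]] := IH _ _ Hv2.
  exists t; split => //; split => //; split.
    apply: rst_trans Ht3 _; apply: rst_step; split => //; split; first by split.
    exists d, (dface i al x), x, phi2, phi, i, al; split => //; split => //; split => //.
    exact: dface_bface.
  by move=> u; rewrite Ht4 /= -Ephi.
exists (LElt x phi); split => //; split; last by split => //; apply: rst_refl.
move=> j; have := N j; move=> /forallPn [u Hu]; by exists u.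
Qed.

Lemma cube_eq d (x x' : bcube T d) : is_bcube x -> is_bcube x' ->
  (forall v, m0 (bmap x) v = m0 (bmap x') v) -> x = x'.
Proof.
case: x => w [g0 g1]; case: x' => w' [g0' g1'] [H0 [H1 H2]] [H0' [H1' H2']] E /=.
simpl in *.
have E0 : g0 = g0' by apply: functional_extensionality.
subst g0'.
have E1 : g1 = g1'.
  apply: functional_extensionality => e; apply: Tedge_eq; [exact: (etrans (H0 e) (esym (H0' e))) | exact: (etrans (H1 e) (esym (H1' e)))].
subst g1'.
have Ew : w = w'.
  apply: functional_extensionality => j.
  have hz : (zv d, j).1 (zv d, j).2 == false by rewrite /= ffunE.
  pose ej : cedge d := exist _ (zv d, j) hz.
  have := H2 ej; have := H2' ej; move=> -> ->; by [].
by subst w'.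
Qed.

Lemma part1 p (t : lelt T p) : lvalid io t -> exists c : hcube T p, is_hcube c /\ lmaps t c.
Proof.
case: t => d x phi [Hc [Hvlt Hham]] /=.
have ex : forall e : cedge p, exists e' : cedge d, esrc e' = phi (esrc e) /\ etgt e' = phi (etgt e).
  move=> e; apply: edge_exists; [apply: Hvlt; exact: cedge_vlt | apply: Hham; exact: cedge_ham].
pose E' := fun e => proj1_sig (constructive_indefinite_description _ (ex e)).
have HE : forall e, esrc (E' e) = phi (esrc e) /\ etgt (E' e) = phi (etgt e).
  by move=> e; rewrite /E'; case: constructive_indefinite_description.
have HE2 : forall e e', esrc e' = phi (esrc e) -> etgt e' = phi (etgt e) -> E' e = e'.
  move=> e e' h1 h2; apply: cedge_eq; by rewrite ?(proj1 (HE e)) ?(proj2 (HE e)).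
pose hs := fun e => bw x (edir (E' e)).
pose c := @HCube _ T p hs (@LMap _ (cube1s hs) T (fun u => m0 (bmap x) (phi u))
                                   (fun e => m1 (bmap x) (E' e))).
case: Hc => [[Hx0 [Hx1 Hx2]] _].
exists c; split; last first.
  split => // e e' h1 h2; by rewrite /= /hs (HE2 e e' h1 h2).
split.
  exists d, (bw x), phi; split; first by split.
  by move=> e e' h1 h2; rewrite /= /hs (HE2 e e' h1 h2).
split; [|split] => e /=.
- exact: (etrans (Hx0 (E' e)) (congr1 (m0 (bmap x)) (proj1 (HE e)))).
- exact: (etrans (Hx1 (E' e)) (congr1 (m0 (bmap x)) (proj2 (HE e)))).
- exact: (Hx2 (E' e)).
Qed.

Lemma part2 p (t t' : lelt T p) (c : hcube T p) : lrel io t t' -> lmaps t c -> lmaps t' c.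
Proof.
move=> [[_ [Hvlt Hham]] [_ [d [x [x' [phi [phi' [i [al [Et [Et' [Ephi [Hw [H0 H1]]]]]]]]]]]]]].
subst t t' => /= [[L0 L1]]; split => /=.
  by move=> u; rewrite L0 Ephi H0.
move=> e e' h1 h2.
have [e'' [s'' t'']] : exists e'' : cedge d, esrc e'' = phi (esrc e) /\ etgt e'' = phi (etgt e).
  by apply: edge_exists; [apply: Hvlt; exact: cedge_vlt | apply: Hham; exact: cedge_ham].
have [L2 L3] := L1 e e'' s'' t''.
have Ee' : e' = eface i al e''.
  apply: cedge_eq; first by rewrite h1 Ephi eface_src s''.
  by rewrite eface_tgt h2 Ephi t''.
split; first by rewrite L2 (H1 e'' e') // Ee' ?eface_tgt.
by rewrite L3 Hw Ee'.
Qed.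

Lemma part3 p (t t' : lelt T p) (c : hcube T p) :
  lvalid io t -> lvalid io t' -> lmaps t c -> lmaps t' c -> lequiv io t t'.
Proof.
case: t => d x phi; case: t' => d' x' phi' Hv Hv' [L0 _] [L0' _].
have [[e y psi] [Hr1 [Hr2 [Hr3 Hr4]]]] := reduce Hv.
have [[e' y' psi'] [Hr1' [Hr2' [Hr3' Hr4']]]] := reduce Hv'.
simpl in *.
have HG : forall u, io (m0 (bmap y) (psi u)) = io (m0 (bmap y') (psi' u)).
  by move=> u; rewrite Hr4 Hr4' -L0 -L0'.
case: Hr1 => Hc Ha; case: Hr1' => Hc' Ha'.
have ee := det_dim (CS_cube Hc) (CS_cube Hc') Ha Ha' Hr2 Hr2' HG.
simpl in ee. subst e'.
have [Ep Ef] := det_same (CS_cube Hc) (CS_cube Hc') Ha Ha' Hr2 Hr2' HG.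
have Ey : y = y'.
  apply: cube_eq; [exact: (proj1 Hc) | exact: (proj1 Hc') | move=> v].
  exact: (vconcat_inj (Ef v)).
have Epsi : psi = psi' by apply: functional_extensionality.
subst y' psi'.
eapply rst_trans; [apply: rst_sym; exact: Hr3 | exact: Hr3'].
Qed.

End Main.


Definition o1 : 'I_2 := Ordinal (isT : 1 < 2).

Lemma ord2P (k : 'I_2) : k = ord0 \/ k = o1.
Proof. by case: k => [[|[|//]] Hk]; [left|right]; apply: val_inj. Qed.

Lemma vert2_eq (u v : vert 2) : u ord0 = v ord0 -> u o1 = v o1 -> u = v.
Proof. by move=> h0 h1; apply/ffunP => k; case: (ord2P k) => ->. Qed.

Lemma vle2 (u v : vert 2) : vle u v = (u ord0 ==> v ord0) && (u o1 ==> v o1).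
Proof.
apply/forallP/andP => [H|[h0 h1] k]; first by split; apply: H.
by case: (ord2P k) => ->.
Qed.

Lemma neq2 (u v : vert 2) : (u != v) = (u ord0 != v ord0) || (u o1 != v o1).
Proof.
apply/idP/idP => [H|].
  apply/negPn/negP; rewrite negb_or !negbK => /andP [/eqP h0 /eqP h1].
  by move: H; rewrite (vert2_eq h0 h1) eqxx.
by case/orP => h; apply/eqP => E; move: h; rewrite E eqxx.
Qed.

Lemma ham2 (u v : vert 2) : ham u v = 1 <-> (u ord0 != v ord0) (+) (u o1 != v o1).
Proof.
rewrite ham1P; split.
  move=> [j [Hj Hk]]; case: (ord2P j) Hj Hk => -> Hj Hk.
    rewrite Hj /=; apply/negP => h; by have := Hk o1 h => /(congr1 val).
  rewrite Hj addbT; apply/negP => h; by have := Hk ord0 h => /(congr1 val).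
case: (boolP (u ord0 != v ord0)) => h0; case: (boolP (u o1 != v o1)) => h1 //= _.
  by exists ord0; split => // k; case: (ord2P k) => -> //; rewrite (negbTE h1).
by exists o1; split => // k; case: (ord2P k) => -> //; rewrite (negbTE h0).
Qed.

Definition gam (u : vert 2) : vert 2 :=
  [ffun k => if k == ord0 then u ord0 || u o1 else u ord0 && u o1].

Lemma gam0 u : gam u ord0 = u ord0 || u o1. Proof. by rewrite ffunE. Qed.
Lemma gam1 u : gam u o1 = u ord0 && u o1. Proof. by rewrite ffunE. Qed.

Lemma gam_adj : adj_pres gam.
Proof.
split => u v.
  rewrite /vlt !vle2 !neq2 !gam0 !gam1.
  by case: (u ord0); case: (u o1); case: (v ord0); case: (v o1).
rewrite !ham2 !gam0 !gam1.
by case: (u ord0); case: (u o1); case: (v ord0); case: (v o1).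
Qed.

Section Strict.
Variables (Sg : Type) (tau : Sg) (bar : Sg -> Sg) (a0 : Sg) (Ha0 : a0 <> tau).

Definition aa (k : 'I_(1 + 2)) : Sg := if val k == 0 then a0 else bar a0.
Definition A1 := fun i : 'I_1 => aa (lshift 2 i).
Definition A2 := fun j : 'I_2 => aa (rshift 1 j).
Local Notation T := (TT tau bar A1 A2).

Definition zl : (zv 1, (ord0 : 'I_1)).1 (zv 1, (ord0 : 'I_1)).2 == false.
Proof. by rewrite /= ffunE. Qed.
Definition ledge : cedge 1 := exist _ (zv 1, (ord0 : 'I_1)) zl.

Lemma pfS (e : cedge 2) : lab (l:=cube1 A1) ledge <> tau /\ bar (lab (l:=cube1 A1) ledge) = lab (l:=cube1 A2) e.
Proof. by rewrite /= /A1 /A2 /aa /=; split. Qed.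

Definition VV (u : vert 2) : V0 T := ([ffun _ => u ord0 || u o1], u).
Definition MM (e : cedge 2) : E1 T :=
  if esrc e == zv 2 then @FS _ tau bar (cube1 A1) (cube1 A2) ledge e (pfS e)
  else @FR _ tau bar (cube1 A1) (cube1 A2) [ffun _ => true] e.
Definition hsS (e : cedge 2) : Sg := flab (MM e).

Definition cS : hcube T 2 := @HCube _ T 2 hsS (@LMap _ (cube1s hsS) T VV MM).

Lemma or_nz (u : vert 2) : (u ord0 || u o1) = (u != zv 2).
Proof. by rewrite neq2 !ffunE; case: (u ord0); case: (u o1). Qed.

Lemma tgt_nz (e : cedge 2) : etgt e != zv 2.
Proof. by apply/eqP => /ffunP /(_ (edir e)); rewrite etgt_dir ffunE. Qed.

Lemma cS_hcube : is_hcube cS.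
Proof.
split.
  exists 2, (fun j : 'I_2 => if j == ord0 then tau else bar a0), gam; split; first exact: gam_adj.
  move=> e e' h1 h2; rewrite /= /hsS /MM.
  have sd := esrc_dir e'; have td := etgt_dir e'.
  case: ifP => [/eqP z|nz] /=.
    have -> : edir e' = ord0.
      case: (ord2P (edir e')) td => -> // td; move: td; rewrite h2 gam1.
      rewrite !etgt_src z !ffunE /= !orbF.
      by case: (ord2P (edir e)) => ->.
    by [].
  have -> : edir e' = o1.
    case: (ord2P (edir e')) sd => -> // sd; move: sd; rewrite h1 gam0 or_nz nz.
    by [].
  by [].
split; [|split] => e.
- change (fd0 (MM e) = VV (esrc e)); rewrite /MM /VV or_nz.
  case: ifP => [/eqP z|nz] /=.
    rewrite z; congr pair; apply/ffunP => k; by rewrite /= !ffunE.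
  by [].
- change (fd1 (MM e) = VV (etgt e)); rewrite /MM /VV or_nz tgt_nz.
  case: ifP => [/eqP z|nz] /=; last by [].
  congr pair; apply/ffunP => k; rewrite !ffunE; by rewrite (ord1 k).
- by [].
Qed.

Lemma cS_notin : ~ exists t : lelt T 2, lvalid (@iotaT _ tau bar 1 2 A1 A2) t /\ lmaps t cS.
Proof.
move=> [[d x phi] [[Hc [_ Ha]] [L0 _]]] /=; simpl in *.
have HCS := CS_cube Hc; case: HCS => C1 _.
set f := fun v => iotaT (m0 (bmap x) v).
have Ef : forall u, f (phi u) = iotaT (VV u) by move=> u; rewrite /f -L0.
pose r0 : 'I_(1 + 2) := lshift 2 ord0.
pose r1 : 'I_(1 + 2) := rshift 1 ord0.
have F0 : forall u, f (phi u) r0 = u ord0 || u o1 by move=> u; rewrite Ef /r0 /iotaT vconcat_l ffunE.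
have F1 : forall u, f (phi u) r1 = u ord0 by move=> u; rewrite Ef /r1 /iotaT vconcat_r.
pose e1 : vert 2 := ind ord0.
pose e2 : vert 2 := ind o1.
have nc : forall r, (forall u, f (phi u) r = u ord0 || u o1) \/ (forall u, f (phi u) r = u ord0) ->
   exists j, isproj f r j.
  move=> r H; case: (C1 r) => [[b Hb]|//].
  have h1 := Hb (phi (zv 2)); have h2 := Hb (phi e1).
  case: H => H; move: h1 h2; rewrite !H /e1 !ffunE /= => <- //.
have [j0 Hj0] := nc r0 (or_introl F0).
have [j1 Hj1] := nc r1 (or_intror F1).
have hz : ham (zv 2) e1 = 1 by apply/ham2; rewrite /e1 !ffunE.
have /ham1P [k [_ Hk]] := Ha _ _ hz.
have d0 : phi (zv 2) j0 != phi e1 j0 by rewrite -!Hj0 !F0 /e1 !ffunE.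
have d1 : phi (zv 2) j1 != phi e1 j1 by rewrite -!Hj1 !F1 /e1 !ffunE.
have Ej : j0 = j1 by rewrite (Hk _ d0) (Hk _ d1).
have := F0 e2; have := F1 e2; rewrite Hj0 Hj1 Ej => ->.
by rewrite /e2 !ffunE.
Qed.
End Strict.


Unset Implicit Arguments.

Theorem theorem8p5 (Sg : Type) (tau : Sg) (bar : Sg -> Sg)
    (Hbar : forall a, a <> tau -> bar a <> tau /\ bar (bar a) = a) :
  (* the inclusion L(COSK(T)) -> cosk_1^{hat}(T^) *)
  (forall (m n : nat) (a : 'I_(m + n) -> Sg) (p : nat),
     let T := fibprod tau bar (cube1 (fun i => a (lshift n i)))
                            (cube1 (fun j => a (rshift m j))) in
     let Th := fibprod tau bar (hcube1 (fun i => a (lshift n i)))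
                             (hcube1 (fun j => a (rshift m j))) in
     let iota : V0 T -> vert (m + n) := @vconcat m n in
     (* the canonical map is well defined on L(COSK T)_p ... *)
     (forall t : lelt T p, lvalid iota t ->
        exists c : hcube Th p, is_hcube c /\ lmaps t c) /\
     (forall (t t' : lelt T p) (c : hcube Th p),
        lrel iota t t' -> lmaps t c -> lmaps t' c) /\
     (* ... and injective *)
     (forall (t t' : lelt T p) (c : hcube Th p),
        lvalid iota t -> lvalid iota t' -> lmaps t c -> lmaps t' c ->
        lequiv iota t t')) /\
  (* strictness for some labelled cubes when Sigma \ {tau} is non-empty *)
  ((exists a : Sg, a <> tau) ->
   exists (m n : nat) (a : 'I_(m + n) -> Sg) (p : nat),
     let T := fibprod tau bar (cube1 (fun i => a (lshift n i)))
                            (cube1 (fun j => a (rshift m j))) in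
     let Th := fibprod tau bar (hcube1 (fun i => a (lshift n i)))
                             (hcube1 (fun j => a (rshift m j))) in
     let iota : V0 T -> vert (m + n) := @vconcat m n in
     exists c : hcube Th p, is_hcube c /\
       ~ exists t : lelt T p, lvalid iota t /\ lmaps t c).
Proof.
split.
  move=> m n a p T Th io.
  split; first exact: (@part1 Sg tau bar m n (fun i => a (lshift n i)) (fun j => a (rshift m j)) p).
  split; first exact: (@part2 Sg tau bar m n (fun i => a (lshift n i)) (fun j => a (rshift m j)) p).
  exact: (@part3 Sg tau bar m n (fun i => a (lshift n i)) (fun j => a (rshift m j)) p).
move=> [a0 Ha0].
exists 1, 2, (aa bar a0), 2 => T Th io.
exists (cS bar Ha0); split; [exact: (@cS_hcube Sg tau bar a0 Ha0) | exact: (@cS_notin Sg tau bar a0 Ha0)].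
Qed.
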